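(* Let $G=(I\cup C,E)$ be a split graph whose clique vertices are labelled $1,\dots,k$ so that conditions (i)–(iii) below hold, and let $w$ be the word constructed below. If $a\in I$ and $b\in C$ are not adjacent in $G$, then $a$ and $b$ do not alternate in $w$.
   Context: Words: a word over a finite set $X$ is a finite sequence of elements of $X$; for a word $u$ and $S\subseteq X$, $u|_S$ is the subsequence of $u$ consisting of all occurrences of letters of $S$; $u^R$ is the reversal of $u$. Two letters $x,y$ alternate in $u$ if $u|_{\{x,y\}}$ is of the form $xyxy\cdots$ or $yxyx\cdots$ (of even or odd length); otherwise they do not alternate. For integers $a\le b$, $[a,b]=\{a,a+1,\dots,b\}$. Setting: $G=(I\cup C,E)$ is a split graph: $C$ induces a clique, $I$ induces an independent set, and $C$ is inclusion-wise maximal, i.e. no vertex of $I$ is adjacent to all vertices of $C$. The vertices of $C$ are labelled by $1,\dots,k$ where $k=|C|$, and for all $a,b\in I$: (i) either $N(a)=[1,m]\cup[n,k]$ for some $m<n$, or $N(a)=[l,r]$ for some $l\le r$; (ii) if $N(a)=[1,m]\cup[n,k]$ ($m<n$) and $N(b)=[l,r]$ ($l\le r$), then $l>m$ or $r<n$; (iii) if $N(a)=[1,m]\cup[n,k]$ and $N(b)=[1,m']\cup[n',k]$ ($m<n$, $m'<n'$), then $m'<n$ and $m<n'$. Let $B$ be the set of $a\in I$ whose neighbourhood is an integer interval $[l_a,r_a]$, and $A=I\setminus B$; for $a\in A$ write $N(a)=[1,m_a]\cup[n_a,k]$ with $m_a<n_a$. Construction of $w$: start with $p_1=p_2=p_3=12\cdots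 k$. Process the vertices of $I$ one at a time in an arbitrary fixed order; ''replace $y$ in $p$ by $yx$'' (resp. $xy$) means replacing the unique occurrence of the letter $y$ in $p$ by the two letters $yx$ (resp. $xy$). For $a\in A$: replace $m_a$ in $p_1$ by $m_a a$, and replace $n_a$ in $p_2$ by $a n_a$. For $a\in B$: replace $l_a$ in $p_1$ by $a l_a$, and replace $r_a$ in $p_2$ by $r_a a$. After all vertices of $I$ are processed, let $d=\max(\{1\}\cup\{m_a: a\in A\})$ and replace the letter $d$ in $p_3$ by the word $d\,(p_1|_A)^R$. Finally set $w=p_1\,(p_1|_B)^R\,p_2\,p_3$ (a $3$-uniform word over $V$). *)

(* Defs.v *)
From mathcomp Require Import all_boot.
Set Implicit Arguments. Unset Strict Implicit. Unset Printing Implicit Defensive.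

(* Vertices of the split graph: clique vertices are [inl i] with 1 <= i <= k,
   independent vertices are [inr a] with a in the list I (processing order).
   The graph is given by N : T -> nat -> bool, N a x = "a adjacent to clique vertex x";
   C is a clique and I independent by definition of a split graph. *)

Section Defs.
Variable T : eqType.
Local Notation letter := (nat + T)%type.

Definition restrict (S : seq letter) (u : seq letter) : seq letter :=
  [seq z <- u | z \in S].

Definition alt_word (x y : letter) (n : nat) : seq letter :=
  mkseq (fun i => if odd i then y else x) n.

Definition alternate (x y : letter) (u : seq letter) : Prop :=
  exists n, restrict [:: x; y] u = alt_word x y n \/
            restrict [:: x; y] u = alt_word y x n.

Definition repl_after (y x : letter) (p : seq letter) : seq letter :=
  flatten [seq if z == y then [:: z; x] else [:: z] | z <- p].
Definition repl_before (y x : letter) (p : seq letter) : seq letter :=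
  flatten [seq if z == y then [:: x; z] else [:: z] | z <- p].
Definition repl_word (y : letter) (s p : seq letter) : seq letter :=
  flatten [seq if z == y then z :: s else [:: z] | z <- p].

Variables (k : nat) (N : T -> nat -> bool).

Definition nbseq (a : T) : seq nat := [seq x <- iota 1 k | N a x].

(* a \in B : N(a) is a (nonempty) integer interval *)
Definition inB (a : T) : bool :=
  (nbseq a != [::]) && (nbseq a == iota (head 0 (nbseq a)) (size (nbseq a))).

(* for a in B : N(a) = [l_a, r_a] *)
Definition l_of (a : T) : nat := head 0 (nbseq a).
Definition r_of (a : T) : nat := last 0 (nbseq a).
(* for a in A : N(a) = [1, m_a] \cup [n_a, k] *)
Definition m_of (a : T) : nat := find (predC (N a)) (iota 1 k).
Definition n_of (a : T) : nat := (k - find (predC (N a)) (rev (iota 1 k))).+1.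

Definition isB_letter (z : letter) : bool :=
  match z with inr a => inB a | inl _ => false end.
Definition isA_letter (z : letter) : bool :=
  match z with inr a => ~~ inB a | inl _ => false end.

Definition clique_word : seq letter := [seq @inl nat T i | i <- iota 1 k].

Definition step (p : seq letter * seq letter) (a : T) : seq letter * seq letter :=
  if inB a then
    (repl_before (inl (l_of a)) (inr a) p.1, repl_after (inl (r_of a)) (inr a) p.2)
  else
    (repl_after (inl (m_of a)) (inr a) p.1, repl_before (inl (n_of a)) (inr a) p.2).

Definition p12 (I : seq T) : seq letter * seq letter :=
  foldl step (clique_word, clique_word) I.

Definition d_of (I : seq T) : nat := maxn 1 (\max_(a <- I | ~~ inB a) m_of a).

Definition word_w (I : seq T) : seq letter :=
  let p1 := (p12 I).1 in
  let p2 := (p12 I).2 in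
  let p3 := repl_word (inl (d_of I)) (rev (filter isA_letter p1)) clique_word in
  p1 ++ rev (filter isB_letter p1) ++ p2 ++ p3.

Definition split_labelling (I : seq T) : Prop :=
  uniq I /\
  [/\
      (forall a x, a \in I -> N a x -> 1 <= x <= k),
      (* C is inclusion-wise maximal *)
      (forall a, a \in I -> exists x, (1 <= x <= k) && ~~ N a x),
      (forall a, a \in I ->
         (exists m n, [/\ 1 <= m, m < n, n <= k &
            forall x, 1 <= x <= k -> N a x = (x <= m) || (n <= x)]) \/
         (exists l r, [/\ 1 <= l, l <= r, r <= k &
            forall x, 1 <= x <= k -> N a x = (l <= x <= r)])),
      (forall a b m n l r, a \in I -> b \in I ->
         1 <= m -> m < n -> n <= k -> 1 <= l -> l <= r -> r <= k ->
         (forall x, 1 <= x <= k -> N a x = (x <= m) || (n <= x)) ->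
         (forall x, 1 <= x <= k -> N b x = (l <= x <= r)) ->
         m < l \/ r < n) &
      (forall a b m n m' n', a \in I -> b \in I ->
         1 <= m -> m < n -> n <= k -> 1 <= m' -> m' < n' -> n' <= k ->
         (forall x, 1 <= x <= k -> N a x = (x <= m) || (n <= x)) ->
         (forall x, 1 <= x <= k -> N b x = (x <= m') || (n' <= x)) ->
         m' < n /\ m < n')].

End Defs.

(* Main.v *)
Require Import Defs.
From mathcomp Require Import all_boot zify.
Set Implicit Arguments. Unset Strict Implicit. Unset Printing Implicit Defensive.

Section H.
Variable T : eqType.
Local Notation letter := (nat + T)%type.

Lemma filter_iota2 (P : pred nat) k i j : 1 <= i -> i < j -> j <= k ->
  (forall x, P x = (x == i) || (x == j)) -> filter P (iota 1 k) = [:: i; j].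
Proof.
move=> i1 ij jk HP.
apply: (irr_sorted_eq (leT:=ltn)) => //.
- exact: ltn_trans.
- by move=> x; exact: ltnn.
- by apply: sorted_filter; [exact: ltn_trans| exact: iota_ltn_sorted].
- by rewrite /= ij.
move=> x; rewrite mem_filter mem_iota HP !inE.
case: (eqVneq x i) => [->|_] /=; first by rewrite i1 add1n ltnS (leq_trans (ltnW ij) jk).
case: (eqVneq x j) => [->|_] //=; by rewrite add1n ltnS jk (leq_trans i1 (ltnW ij)).
Qed.

Lemma restr_cw (S : seq letter) k i j : 1 <= i -> i < j -> j <= k ->
  (forall x, (inl x \in S) = (x == i) || (x == j)) ->
  restrict S (clique_word T k) = [:: inl i; inl j].
Proof.
move=> i1 ij jk HS; rewrite /restrict /clique_word filter_map.
by rewrite (@filter_iota2 _ k i j).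
Qed.

Lemma restr_before_out (S : seq letter) y x p : x \notin S ->
  restrict S (repl_before y x p) = restrict S p.
Proof.
move=> hx; elim: p => //= z p IH.
move: IH; rewrite /restrict /repl_before /= => IH.
rewrite filter_cat IH; case: (z == y) => /=; rewrite ?(negbTE hx); by case: (z \in S).
Qed.

Lemma restr_after_out (S : seq letter) y x p : x \notin S ->
  restrict S (repl_after y x p) = restrict S p.
Proof.
move=> hx; elim: p => //= z p IH.
move: IH; rewrite /restrict /repl_after /= => IH.
rewrite filter_cat IH; case: (z == y) => //=; rewrite ?(negbTE hx) /=; by case: (z \in S).
Qed.

Lemma restr_before_in (S : seq letter) y x p : x \in S -> y \in S ->
  restrict S (repl_before y x p) = repl_before y x (restrict S p).
Proof.
move=> hx hy; elim: p => //= z p IH.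
move: IH; rewrite /restrict /repl_before /= => IH.
rewrite filter_cat IH; case: (eqVneq z y) => [->|ne] /=; first by rewrite hx hy /= eqxx.
by case: (z \in S) => //=; rewrite (negbTE ne).
Qed.

Lemma restr_after_in (S : seq letter) y x p : x \in S -> y \in S ->
  restrict S (repl_after y x p) = repl_after y x (restrict S p).
Proof.
move=> hx hy; elim: p => //= z p IH.
move: IH; rewrite /restrict /repl_after /= => IH.
rewrite filter_cat IH; case: (eqVneq z y) => [->|ne] /=; first by rewrite hx hy /= eqxx.
by case: (z \in S) => //=; rewrite (negbTE ne).
Qed.

Lemma alt_neq (x y d : letter) n i : x != y -> i.+1 < n ->
  nth d (alt_word x y n) i != nth d (alt_word x y n) i.+1.
Proof.
move=> xy lt; rewrite !nth_mkseq // ?(ltnW lt) //=.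
by case: (odd i) => //=; rewrite eq_sym.
Qed.

Lemma no_alt (x y : letter) (s0 : seq letter) i : x != y ->
  let s := restrict [:: x; y] s0 in i.+1 < size s ->
  nth x s i = nth x s i.+1 -> ~ alternate x y s0.
Proof.
move=> xy s lt E [n [] E']; rewrite /s E' size_mkseq in lt; move: E; rewrite /s E' => E.
- by move: (@alt_neq x y x n i xy lt); rewrite E eqxx.
- by move: (@alt_neq y x x n i); rewrite eq_sym xy E eqxx => /(_ isT lt).
Qed.

End H.
Section H2.
Variable T : eqType.
Local Notation letter := (nat + T)%type.
Variables (k : nat) (N : T -> nat -> bool).

Lemma mem_nb a x : (x \in nbseq k N a) = N a x && (1 <= x <= k).
Proof. by rewrite mem_filter mem_iota add1n ltnS. Qed.

Lemma B_facts a b : inB k N a -> 1 <= b <= k -> ~~ N a b ->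
  [/\ 1 <= l_of k N a, l_of k N a <= r_of k N a, r_of k N a <= k &
      (b < l_of k N a \/ r_of k N a < b)].
Proof.
move=> /andP[ne /eqP E] bk Nab.
have lin : l_of k N a \in nbseq k N a.
  by rewrite /l_of; case: (nbseq k N a) ne => //= x s _; rewrite mem_head.
have rin : r_of k N a \in nbseq k N a.
  by rewrite /r_of; case: (nbseq k N a) ne => //= x s _; apply: mem_last.
have bn : b \notin nbseq k N a by rewrite mem_nb (negbTE Nab).
move: (lin) (rin); rewrite !mem_nb => /andP[_ /andP[l1 lk]] /andP[_ /andP[r1 rk]].
move: rin bn; rewrite E -/(l_of k N a) !mem_iota => /andP[lr rl] bn.
split=> //.
case: (ltnP b (l_of k N a)) => bl; [by left|right].
by move: bn; rewrite bl /= -leqNgt; lia.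
Qed.

Lemma form2_B a l r : 1 <= l -> l <= r -> r <= k ->
  (forall x, 1 <= x <= k -> N a x = (l <= x <= r)) -> inB k N a.
Proof.
move=> l1 lr rk H.
have E : nbseq k N a = iota l (r - l).+1.
  apply: (irr_sorted_eq (leT:=ltn)).
  - exact: ltn_trans.
  - by move=> x; exact: ltnn.
  - by apply: sorted_filter; [exact: ltn_trans| exact: iota_ltn_sorted].
  - exact: iota_ltn_sorted.
  move=> x; rewrite mem_nb mem_iota.
  case xk: (1 <= x <= k); last first.
    by rewrite andbF; apply/esym/negbTE; move: xk; lia.
  by rewrite H // andbT; lia.
by rewrite /inB E /= size_iota eqxx.
Qed.

Lemma A_facts a b : ~~ inB k N a -> 1 <= b <= k -> ~~ N a b ->
  N a 1 -> N a k ->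
  [/\ 1 <= m_of k N a, m_of k N a < b, b < n_of k N a & n_of k N a <= k].
Proof.
move=> nB /andP[b1 bk] Nab Na1 Nak.
have hasN : has (predC (N a)) (iota 1 k).
  by apply/hasP; exists b; rewrite ?mem_iota ?add1n ?ltnS ?b1 ?bk //= Nab.
have hasR : has (predC (N a)) (rev (iota 1 k)) by rewrite has_rev.
have mk := hasN; rewrite has_find size_iota in mk.
have jk := hasR; rewrite has_find size_rev size_iota in jk.
have nm := nth_find 0 hasN; rewrite nth_iota // in nm.
have nj := nth_find 0 hasR; rewrite nth_rev ?size_iota // nth_iota in nj; last by lia.
rewrite /m_of /n_of.
set m := find _ (iota 1 k) in mk nm *.
set j := find _ (rev (iota 1 k)) in jk nj *.
split.
- by case: m nm mk => //=; rewrite Na1.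
- rewrite ltnNge; apply/negP => bm.
  have := @before_find _ 0 (predC (N a)) (iota 1 k) b.-1.
  rewrite -/m nth_iota /=; last by lia.
  have -> : 1 + b.-1 = b by lia.
  by rewrite (negbTE Nab) => H; move: (H ltac:(lia)).
- case: (leqP b (k - j)) => [?|bj]; first by lia.
  have := @before_find _ 0 (predC (N a)) (rev (iota 1 k)) (k - b).
  rewrite -/j nth_rev ?size_iota; last by lia.
  rewrite nth_iota /=; last by lia.
  have -> : 1 + (k - (k - b).+1) = b by lia.
  by rewrite (negbTE Nab) => H; move: (H ltac:(lia)).
- case: j nj jk => [|j] /=; last by lia.
  by rewrite subn1 add1n prednK ?Nak //; lia.
Qed.


Lemma fold_restr (S : seq letter) J p : (forall c, c \in J -> inr c \notin S) ->
  restrict S (foldl (step k N) p J).1 = restrict S p.1 /\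
  restrict S (foldl (step k N) p J).2 = restrict S p.2.
Proof.
elim: J p => //= c J IH p H.
have hc : inr c \notin S by apply: H; rewrite mem_head.
have [-> ->] := IH (step k N p c) (fun c' h => H c' (mem_behead (s:=c::J) h)).
rewrite /step; case: (inB k N c) => /=;
  by rewrite ?restr_before_out ?restr_after_out.
Qed.

Lemma p12_restr (S : seq letter) I1 I2 a : a \notin I1 -> a \notin I2 ->
  (forall c, inr c \in S -> c = a) -> inr a \in S ->
  ((if inB k N a then inl (l_of k N a) else inl (m_of k N a)) \in S ->
   restrict S (p12 k N (I1 ++ a :: I2)).1 =
   restrict S (step k N (clique_word T k, clique_word T k) a).1) /\
  ((if inB k N a then inl (r_of k N a) else inl (n_of k N a)) \in S ->
   restrict S (p12 k N (I1 ++ a :: I2)).2 =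
   restrict S (step k N (clique_word T k, clique_word T k) a).2).
Proof.
move=> a1 a2 HS aS.
have nS : forall J : seq T, a \notin J -> forall c, c \in J -> inr c \notin S.
  move=> J aJ c cJ; case cS: (inr c \in S) => //; move: aJ; by rewrite -(HS c cS) cJ.
rewrite /p12 foldl_cat /=.
have [F1 F2] := fold_restr (step k N (foldl (step k N) (clique_word T k, clique_word T k) I1) a) (nS _ a2).
have [G1 G2] := fold_restr (clique_word T k, clique_word T k) (nS _ a1).
rewrite F1 F2 /step; case: (inB k N a) => /=; split=> h;
  by rewrite ?restr_before_in ?restr_after_in // ?G1 ?G2.
Qed.

End H2.

Unset Implicit Arguments.

Lemma restr_sub (T : eqType) (S S' u : seq (nat + T)) : {subset S <= S'} ->
  restrict S (restrict S' u) = restrict S u.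
Proof.
move=> sub; rewrite /restrict -filter_predI; apply: eq_filter => z /=.
by case zS: (z \in S) => //=; rewrite (sub _ zS).
Qed.

Lemma restr_B (T : eqType) (S u : seq (nat + T)) k N :
  restrict S (filter (@isB_letter T k N) u) = filter (@isB_letter T k N) (restrict S u).
Proof. by rewrite /restrict -!filter_predI; apply: eq_filter => z /=; rewrite andbC. Qed.

Lemma inl_eq (T : eqType) (x y : nat) : (@inl nat T x == inl y) = (x == y).
Proof. by apply/eqP/eqP => [[]|->]. Qed.

Theorem lemma4 (T : eqType) (k : nat) (N : T -> nat -> bool) (I : seq T) :
  split_labelling k N I ->
  forall (a : T) (b : nat), a \in I -> 1 <= b <= k -> ~~ N a b ->
  ~ alternate (inr a) (inl b) (word_w k N I).
Proof.
move=> [uI [Hrng Hmax Hform Hii Hiii]] a b aI /andP[b1 bk] Nab.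
have Fa := Hform a aI.
clear Hii Hiii Hform Hmax Hrng.
move: uI; case/splitPr: aI => I1 I2 uI.
have [aI1 aI2] : a \notin I1 /\ a \notin I2.
  move: uI; rewrite cat_uniq => /and3P[_ /hasPn hs u2].
  move: u2 => /= /andP[aI2 _]; split => //.
  exact: (hs a (mem_head _ _)).
set S := [:: inr a; inl b] : seq (nat + T).
have HS : forall (l : nat) c, inr c \in [:: inr a; inl b; inl l] -> c = a.
  by move=> l c; rewrite !inE => /orP[/eqP[]|/orP[]] //.
have E : forall u v x, restrict S (u ++ rev (filter (isB_letter k N) u) ++ v ++ x) =
   restrict S u ++ rev (filter (isB_letter k N) (restrict S u)) ++ restrict S v ++ restrict S x.
  by move=> u v x; rewrite -restr_B /restrict !filter_cat filter_rev.
have ab : (inr a : nat + T) != inl b by [].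
rewrite /word_w.
set P1 := (p12 k N _).1; set P2 := (p12 k N _).2.
have sub3 : forall l : nat, {subset S <= [:: inr a; inl b; inl l]}.
  by move=> l z; rewrite !inE => /orP[]->; rewrite ?orbT.
have R1 : forall l : nat,
  (if inB k N a then inl (l_of k N a) else inl (m_of k N a)) = (inl l : nat + T) ->
  restrict S P1 = restrict S (restrict [:: inr a; inl b; inl l] (step k N (clique_word T k, clique_word T k) a).1).
  move=> l El; rewrite -(@restr_sub _ S [:: inr a; inl b; inl l]) //.
  by rewrite (proj1 (@p12_restr T k N [:: inr a; inl b; inl l] I1 I2 a aI1 aI2 (HS l) (mem_head _ _))) ?El ?inE ?eqxx ?orbT.
have R2 : forall l : nat,
  (if inB k N a then inl (r_of k N a) else inl (n_of k N a)) = (inl l : nat + T) ->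
  restrict S P2 = restrict S (restrict [:: inr a; inl b; inl l] (step k N (clique_word T k, clique_word T k) a).2).
  move=> l El; rewrite -(@restr_sub _ S [:: inr a; inl b; inl l]) //.
  by rewrite (proj2 (@p12_restr T k N [:: inr a; inl b; inl l] I1 I2 a aI1 aI2 (HS l) (mem_head _ _))) ?El ?inE ?eqxx ?orbT.
have bb : 1 <= b <= k by rewrite b1 bk.
have mem3 : forall l x : nat, (inl x \in [:: inr a; inl b; inl l]) = (x == b) || (x == l).
  by move=> l x; rewrite !inE.
have mem3' : forall l x : nat, (inl x \in [:: inr a; inl b; inl l]) = (x == l) || (x == b).
  by move=> l x; rewrite mem3 orbC.
have inSr : forall l, inr a \in [:: inr a; inl b; inl l] by move=> l; rewrite mem_head.
have inSl : forall l, (inl l : nat + T) \in [:: inr a; inl b; inl l] by move=> l; rewrite !inE eqxx !orbT.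
case Ba: (inB k N a).
  have [l1 lr rk [bl|rb]] := @B_facts T k N a b Ba bb Nab.
    have ne1 : (l_of k N a == b) = false by rewrite gtn_eqF.
    have ne2 : (r_of k N a == b) = false by rewrite gtn_eqF // (leq_trans bl lr).
    have H1 : restrict S P1 = [:: inl b; inr a].
      rewrite (R1 (l_of k N a)); last by rewrite Ba.
      rewrite /step Ba /= restr_before_in // (@restr_cw T _ k b (l_of k N a)) //; last exact: leq_trans lr rk.
      by rewrite /repl_before /restrict /= ?inE ?inl_eq ?eqxx ?ne1 ?ne2 ?(eq_sym b) ?ne1 ?ne2 /= /S ?inE ?inl_eq ?eqxx ?ne1 ?ne2 /=.
    have H2 : restrict S P2 = [:: inl b; inr a].
      rewrite (R2 (r_of k N a)); last by rewrite Ba.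
      rewrite /step Ba /= restr_after_in // (@restr_cw T _ k b (r_of k N a)) //; last exact: leq_trans bl lr.
      by rewrite /repl_after /restrict /= ?inE ?inl_eq ?eqxx ?ne1 ?ne2 ?(eq_sym b) ?ne1 ?ne2 /= /S ?inE ?inl_eq ?eqxx ?ne1 ?ne2 /=.
    apply: (@no_alt T (inr a) (inl b) _ 1 ab) => /=; by rewrite -/S E H1 H2 /= Ba.
  have ne1 : (l_of k N a == b) = false by rewrite ltn_eqF // (leq_ltn_trans lr rb).
  have ne2 : (r_of k N a == b) = false by rewrite ltn_eqF.
  have H1 : restrict S P1 = [:: inr a; inl b].
    rewrite (R1 (l_of k N a)); last by rewrite Ba.
    rewrite /step Ba /= restr_before_in // (@restr_cw T _ k (l_of k N a) b) //; last exact: leq_ltn_trans lr rb.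
    by rewrite /repl_before /restrict /= ?inE ?inl_eq ?eqxx ?ne1 ?ne2 ?(eq_sym b) ?ne1 ?ne2 /= /S ?inE ?inl_eq ?eqxx ?ne1 ?ne2 /=.
  have H2 : restrict S P2 = [:: inr a; inl b].
    rewrite (R2 (r_of k N a)); last by rewrite Ba.
    rewrite /step Ba /= restr_after_in // (@restr_cw T _ k (r_of k N a) b) //; last exact: leq_trans l1 lr.
    by rewrite /repl_after /restrict /= ?inE ?inl_eq ?eqxx ?ne1 ?ne2 ?(eq_sym b) ?ne1 ?ne2 /= /S ?inE ?inl_eq ?eqxx ?ne1 ?ne2 /=.
  apply: (@no_alt T (inr a) (inl b) _ 2 ab) => /=; by rewrite -/S E H1 H2 /= Ba.
have k1 : 1 <= k by apply: leq_trans b1 bk.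
have [Na1 Nak] : N a 1 /\ N a k.
  case: Fa => [[m [n [m1 mn nk HN]]]|[l [r [l1 lr rk HN]]]].
    by rewrite !HN ?m1 ?nk ?orbT ?k1 ?leqnn.
  by move: (@form2_B T k N a l r l1 lr rk HN); rewrite Ba.
have [m1 mb bn nk] := @A_facts T k N a b (negbT Ba) bb Nab Na1 Nak.
have ne1 : (m_of k N a == b) = false by rewrite ltn_eqF.
have ne2 : (n_of k N a == b) = false by rewrite gtn_eqF.
have H1 : restrict S P1 = [:: inr a; inl b].
  rewrite (R1 (m_of k N a)); last by rewrite Ba.
  rewrite /step Ba /= restr_after_in // (@restr_cw T _ k (m_of k N a) b) //.
  by rewrite /repl_after /restrict /= ?inE ?inl_eq ?eqxx ?ne1 ?ne2 ?(eq_sym b) ?ne1 ?ne2 /= /S ?inE ?inl_eq ?eqxx ?ne1 ?ne2 /=.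
have H2 : restrict S P2 = [:: inl b; inr a].
  rewrite (R2 (n_of k N a)); last by rewrite Ba.
  rewrite /step Ba /= restr_before_in // (@restr_cw T _ k b (n_of k N a)) //.
  by rewrite /repl_before /restrict /= ?inE ?inl_eq ?eqxx ?ne1 ?ne2 ?(eq_sym b) ?ne1 ?ne2 /= /S ?inE ?inl_eq ?eqxx ?ne1 ?ne2 /=.
apply: (@no_alt T (inr a) (inl b) _ 1 ab) => /=; by rewrite -/S E H1 H2 /= Ba.
Qed.
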